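(* Let $\sigma$ be any argumentation semantics whose extensions are maximal admissible sets (w.r.t. set inclusion). For every two argumentation frameworks $AF=(AR,Attacks)$, $AF'=(AR',Attacks')$ with $AF\preceq_N AF'$: if for every $E\in\sigma(AF)$ there exists $E'\in\sigma(AF')$ with $E\subseteq E'$, then for every $E\in\sigma(AF)$ there exists $E'\in\sigma(AF')$ with $E'\not\subseteq AR$ or $E'=E$.
   Context: An argumentation framework is a pair $(AR,Attacks)$ with $AR$ a finite set and $Attacks\subseteq AR\times AR$; $a$ attacks $b$ iff $(a,b)\in Attacks$; a set $S$ attacks $b$ iff some element of $S$ attacks $b$. A set $S$ is conflict-free iff no element of $S$ attacks an element of $S$; an argument $a$ is acceptable w.r.t. $S$ iff every attacker of $a$ is attacked by $S$; a conflict-free $S$ is admissible iff every element of $S$ is acceptable w.r.t. $S$. An argumentation semantics $\sigma$ assigns to each argumentation framework a set $\sigma(AF)$ of subsets of $AR$; ''$\sigma$'s extensions are maximal admissible sets'' means that for every $AF$, every $E\in\sigma(AF)$ is a $\subseteq$-maximal admissible set of $AF$. $AF\preceq_N AF'$ (normal expansion) iff $AR\subseteq AR'$, $Attacks\subseteq Attacks'$ and no $(a,b)\in Attacks'\setminus Attacks$ has both $a,b\in AR$. *)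

(* Defs.v *)
From mathcomp Require Import all_boot.
Set Implicit Arguments. Unset Strict Implicit. Unset Printing Implicit Defensive.

(* Argumentation frameworks whose arguments are drawn from an ambient finite
   type U (so that AR ⊆ AR' makes sense between two frameworks). *)
Record AF (U : finType) := mkAF {
  args : {set U};
  attacks : {set U * U};
  attacks_sub : attacks \subset setX args args }.

Section Arg.
Variable U : finType.
Implicit Types (F : AF U) (S : {set U}) (a b : U).

Definition attacksb F a b : bool := (a, b) \in attacks F.

Definition set_attacks F S b : Prop := exists2 a, a \in S & attacksb F a b.

Definition conflict_free F S : Prop :=
  S \subset args F /\ forall a b, a \in S -> b \in S -> ~~ attacksb F a b.

Definition acceptable F a S : Prop :=
  forall b, attacksb F b a -> set_attacks F S b.

Definition admissible F S : Prop :=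
  conflict_free F S /\ forall a, a \in S -> acceptable F a S.

Definition maximal_admissible F S : Prop :=
  admissible F S /\ forall T, admissible F T -> S \subset T -> T = S.

Definition semantics := AF U -> {set U} -> Prop.

Definition ext_maximal_admissible (sigma : semantics) : Prop :=
  forall F E, sigma F E -> maximal_admissible F E.

Definition normal_expansion F F' : Prop :=
  [/\ args F \subset args F',
      attacks F \subset attacks F' &
      forall a b, attacksb F' a b -> ~~ attacksb F a b ->
        ~ (a \in args F /\ b \in args F)].
End Arg.

(* Main.v *)
Require Import Defs.
From mathcomp Require Import all_boot.

Theorem proposition57 (U : finType) (sigma : semantics U) :
  ext_maximal_admissible sigma ->
  forall F F' : AF U, normal_expansion F F' ->
  (forall E, sigma F E -> exists2 E', sigma F' E' & E \subset E') ->
  forall E, sigma F E ->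
    exists2 E', sigma F' E' & (~~ (E' \subset args F) \/ E' = E).
Proof.
move=> Hmax F F' [sAR sAT Hnew] Hext E sE.
have [E' sE' sEE'] := Hext E sE.
exists E' => //.
case: (boolP (E' \subset args F)) => HE'; [right | by left].
have [[[_ cf'] acc'] _] := Hmax _ _ sE'.
have [_ maxE] := Hmax _ _ sE.
apply: maxE sEE'.
have subA : forall a b, attacksb F a b -> attacksb F' a b.
  by move=> a b; rewrite /attacksb => H; apply: (subsetP sAT).
split; first split => //.
  move=> a b aE bE; apply/negP => /subA; exact/negP/cf'.
move=> a aE b bA.
have [c cE cb] := acc' a aE b (subA _ _ bA).
exists c => //.
case: (boolP (attacksb F c b)) => // Hn.
exfalso; apply: (Hnew c b cb Hn); split; first exact: (subsetP HE').
have := subsetP (attacks_sub F) _ bA.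
by rewrite in_setX => /andP[].
Qed.
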